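(* A conditional frame $(X,\leq,\mathcal{R})$ validates $\mathsf{iCC}=\mathsf{ICK}\oplus(p\mathrel{\Box\!\!\!\rightarrow} p)\oplus(((p\mathrel{\Box\!\!\!\rightarrow} q)\wedge((p\wedge q)\mathrel{\Box\!\!\!\rightarrow} r))\to(p\mathrel{\Box\!\!\!\rightarrow} r))\oplus(((p\mathrel{\Box\!\!\!\rightarrow} q)\wedge(p\mathrel{\Box\!\!\!\rightarrow} r))\to((p\wedge q)\mathrel{\Box\!\!\!\rightarrow} r))$ if and only if for all $x\in X$ and upsets $a,b$: (i) $R_a[x]\subseteq a$; and (ii) $R_a[x]\subseteq b\subseteq a$ implies ${\uparrow}R_a[x]={\uparrow}R_b[x]$.
   Context: Formulas: $\phi ::= p\mid\bot\mid\phi\wedge\phi\mid\phi\vee\phi\mid\phi\to\phi\mid\phi\mathrel{\Box\!\!\!\rightarrow}\phi$. $\mathsf{ICK}\oplus\Gamma$ is the smallest set containing intuitionistic propositional logic, $\Gamma$, $(p\mathrel{\Box\!\!\!\rightarrow}(q\wedge r))\leftrightarrow((p\mathrel{\Box\!\!\!\rightarrow} q)\wedge(p\mathrel{\Box\!\!\!\rightarrow} r))$ and $(p\mathrel{\Box\!\!\!\rightarrow}\top)\leftrightarrow\top$, closed under uniform substitution, modus ponens and congruence rules for both arguments of $\mathrel{\Box\!\!\!\rightarrow}$. A conditional frame is $(X,\leq,\mathcal{R})$, $(X,\leq)$ a nonempty preorder, $\mathcal{R}=\{R_a\mid a\text{ an upset}\}$ with $(\leq\circ R_a)\subseteq(R_a\circ\leq)$;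 valuations assign upsets to letters and $x\models\phi\mathrel{\Box\!\!\!\rightarrow}\psi$ iff every $y$ with $xR_{V(\phi)}y$ satisfies $\psi$. *)

(* Defs.v *)
From Stdlib Require Import Arith.

Inductive form : Type :=
| Var : nat -> form
| Bot : form
| And : form -> form -> form
| Or : form -> form -> form
| Imp : form -> form -> form
| Cond : form -> form -> form.

Definition Top : form := Imp Bot Bot.
Definition Iff (a b : form) : form := And (Imp a b) (Imp b a).

Definition p : form := Var 0.
Definition q : form := Var 1.
Definition r : form := Var 2.

Fixpoint subst (s : nat -> form) (f : form) : form :=
  match f with
  | Var n => s n
  | Bot => Bot
  | And a b => And (subst s a) (subst s b)
  | Or a b => Or (subst s a) (subst s b)
  | Imp a b => Imp (subst s a) (subst s b)
  | Cond a b => Cond (subst s a) (subst s b)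
  end.

Inductive iCC : form -> Prop :=
| ipc1 : iCC (Imp p (Imp q p))
| ipc2 : iCC (Imp (Imp p (Imp q r)) (Imp (Imp p q) (Imp p r)))
| ipc3 : iCC (Imp (And p q) p)
| ipc4 : iCC (Imp (And p q) q)
| ipc5 : iCC (Imp p (Imp q (And p q)))
| ipc6 : iCC (Imp p (Or p q))
| ipc7 : iCC (Imp q (Or p q))
| ipc8 : iCC (Imp (Imp p r) (Imp (Imp q r) (Imp (Or p q) r)))
| ipc9 : iCC (Imp Bot p)
| ick_and : iCC (Iff (Cond p (And q r)) (And (Cond p q) (Cond p r)))
| ick_top : iCC (Iff (Cond p Top) Top)
| ax_id : iCC (Cond p p)
| ax_cut : iCC (Imp (And (Cond p q) (Cond (And p q) r)) (Cond p r))
| ax_cm : iCC (Imp (And (Cond p q) (Cond p r)) (Cond (And p q) r))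
| rule_subst : forall s f, iCC f -> iCC (subst s f)
| rule_mp : forall a b, iCC a -> iCC (Imp a b) -> iCC b
| rule_congl : forall a a' b, iCC (Iff a a') -> iCC (Iff (Cond a b) (Cond a' b))
| rule_congr : forall a b b', iCC (Iff b b') -> iCC (Iff (Cond a b) (Cond a b')).

Definition upset {X : Type} (le : X -> X -> Prop) (a : X -> Prop) : Prop :=
  forall x y, a x -> le x y -> a y.

Record cframe : Type := CFrame {
  W :> Type;
  le : W -> W -> Prop;
  le_refl : forall x, le x x;
  le_trans : forall x y z, le x y -> le y z -> le x z;
  inhabited_W : inhabited W;
  (* R a is R_a; only its values on upsets a are relevant *)
  R : (W -> Prop) -> W -> W -> Prop;
  R_coh : forall a, upset le a ->
    forall x y z, le x y -> R a y z -> exists w, R a x w /\ le w z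
}.

Definition valuation (F : cframe) := nat -> F -> Prop.
Definition upset_val (F : cframe) (V : valuation F) : Prop :=
  forall n, upset (le F) (V n).

Fixpoint sat (F : cframe) (V : valuation F) (x : F) (f : form) : Prop :=
  match f with
  | Var n => V n x
  | Bot => False
  | And a b => sat F V x a /\ sat F V x b
  | Or a b => sat F V x a \/ sat F V x b
  | Imp a b => forall y, le F x y -> sat F V y a -> sat F V y b
  | Cond a b => forall y, R F (fun z => sat F V z a) x y -> sat F V y b
  end.

Definition validates (F : cframe) (L : form -> Prop) : Prop :=
  forall f, L f -> forall V, upset_val F V -> forall x, sat F V x f.

Definition upR (F : cframe) (a : F -> Prop) (x : F) : F -> Prop :=
  fun z => exists y, R F a x y /\ le F y z.

(* Main.v *)
Require Import Defs.
From Stdlib Require Import FunctionalExtensionality PropExtensionality.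

Lemma persist (F : cframe) (V : valuation F) (HV : upset_val F V) f :
  forall x y, sat F V x f -> le F x y -> sat F V y f.
Proof.
  induction f; simpl; intros x y H hxy.
  - exact (HV n x y H hxy).
  - exact H.
  - destruct H; split; eauto.
  - destruct H; [left|right]; eauto.
  - intros z hyz Ha. apply H; [eapply le_trans; eauto | auto].
  - intros z Hz.
    assert (Hu : upset (le F) (fun z => sat F V z f1)) by (intros u v Hu Huv; eauto).
    destruct (R_coh F _ Hu x y z hxy Hz) as [w [Hw1 Hw2]].
    eapply IHf2; [apply H; exact Hw1 | exact Hw2].
Qed.

Lemma sat_subst (F : cframe) (V : valuation F) s f :
  forall x, sat F V x (subst s f) <-> sat F (fun n z => sat F V z (s n)) x f.
Proof.
  induction f; simpl; intros x.
  - tauto.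
  - tauto.
  - rewrite IHf1, IHf2; tauto.
  - rewrite IHf1, IHf2; tauto.
  - split; intros H y hy Hy; [apply IHf2; apply H; auto; apply IHf1 | apply IHf2; apply H; auto; apply IHf1]; auto.
  - assert (E : (fun z => sat F V z (subst s f1)) =
                (fun z => sat F (fun n z => sat F V z (s n)) z f1)).
    { extensionality z; apply propositional_extensionality; apply IHf1. }
    rewrite E. split; intros H y Hy; apply IHf2; apply H; auto.
Qed.

Lemma upR_upset (F : cframe) a x : upset (le F) (upR F a x).
Proof. intros u v [y [H1 H2]] H3. exists y; split; auto. eapply le_trans; eauto. Qed.

Theorem lemma6p1 (F : cframe) :
  validates F iCC <->
  (forall (x : F) (a b : F -> Prop), upset (le F) a -> upset (le F) b ->
     (forall y, R F a x y -> a y) /\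
     ((forall y, R F a x y -> b y) -> (forall y, b y -> a y) ->
        forall z, upR F a x z <-> upR F b x z)).
Proof.
  split.
  - intros Hv x a b Ha Hb. split.
    + intros y Hy.
      set (V := fun (n : nat) => a).
      assert (HV : upset_val F V) by (intros n; exact Ha).
      exact (Hv _ ax_id V HV x y Hy).
    + intros Hab Hba.
      assert (Eb : (fun z => a z /\ b z) = b).
      { extensionality z; apply propositional_extensionality; split; [tauto|auto]. }
      assert (K1 : forall y, R F a x y -> upR F b x y).
      { set (V := fun (n : nat) => match n with 0 => a | 1 => b | _ => upR F b x end).
        assert (HV : upset_val F V)
          by (intros [|[|n]]; [exact Ha|exact Hb|apply upR_upset]).
        pose proof (Hv _ ax_cut V HV x x (le_refl F x)) as H. simpl in H.
        change (fun z => a z /\ b z) with (fun z => a z /\ b z) in H.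
        unfold V in H; simpl in H. rewrite Eb in H.
        apply H. split; [exact Hab|]. intros y Hy. exists y; split; auto. apply le_refl. }
      assert (K2 : forall y, R F b x y -> upR F a x y).
      { set (V := fun (n : nat) => match n with 0 => a | 1 => b | _ => upR F a x end).
        assert (HV : upset_val F V)
          by (intros [|[|n]]; [exact Ha|exact Hb|apply upR_upset]).
        pose proof (Hv _ ax_cm V HV x x (le_refl F x)) as H. simpl in H.
        unfold V in H; simpl in H. rewrite Eb in H.
        apply H. split; [exact Hab|]. intros y Hy. exists y; split; auto. apply le_refl. }
      intros z; split; intros [y [H1 H2]].
      * destruct (K1 y H1) as [w [Hw1 Hw2]]. exists w; split; auto. eapply le_trans; eauto.
      * destruct (K2 y H1) as [w [Hw1 Hw2]]. exists w; split; auto. eapply le_trans; eauto.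
  - intros Hc f Hf. induction Hf; intros V HV x; unfold Top, Iff in *; simpl in *.
    + intros y _ Hp z hyz _. exact (HV 0 y z Hp hyz).
    + intros y _ H1 z hyz H2 w hzw H3.
      assert (hyw : le F y w) by (eapply le_trans; eauto).
      apply (H1 w hyw H3 w (le_refl F w)). apply H2; auto.
    + tauto.
    + tauto.
    + intros y _ Hp z hyz Hq. split; auto. exact (HV 0 y z Hp hyz).
    + tauto.
    + tauto.
    + intros y _ H1 z hyz H2 w hzw [H3|H3].
      * apply H1; auto. eapply le_trans; eauto.
      * apply H2; auto.
    + intros _ _ [].
    + split.
      * intros y _ H. split; intros z Hz; apply (H z Hz).
      * intros y _ [H1 H2] z Hz. split; auto.
    + split.
      * intros y _ _ z _ H; exact H.
      * intros y _ _ z _ w _ H; exact H.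
    + intros y Hy. apply (proj1 (Hc x (V 0) (V 0) (HV 0) (HV 0)) y Hy).
    + intros y hxy [H1 H2] z Hz.
      set (a := fun z => V 0 z). set (b := fun z => V 0 z /\ V 1 z).
      assert (Ha : upset (le F) a) by apply HV.
      assert (Hb : upset (le F) b) by (intros u v [] ?; split; eapply HV; eauto).
      destruct (Hc y a b Ha Hb) as [Hi Hii].
      assert (Hz' : upR F a y z) by (exists z; split; [exact Hz|apply le_refl]).
      apply (Hii (fun w Hw => conj (Hi w Hw) (H1 w Hw)) (fun w Hw => proj1 Hw) z) in Hz'.
      destruct Hz' as [w [Hw1 Hw2]].
      exact (HV 2 w z (H2 w Hw1) Hw2).
    + intros y hxy [H1 H2] z Hz.
      set (a := fun z => V 0 z). set (b := fun z => V 0 z /\ V 1 z).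
      assert (Ha : upset (le F) a) by apply HV.
      assert (Hb : upset (le F) b) by (intros u v [] ?; split; eapply HV; eauto).
      destruct (Hc y a b Ha Hb) as [Hi Hii].
      assert (Hz' : upR F b y z) by (exists z; split; [exact Hz|apply le_refl]).
      apply (Hii (fun w Hw => conj (Hi w Hw) (H1 w Hw)) (fun w Hw => proj1 Hw) z) in Hz'.
      destruct Hz' as [w [Hw1 Hw2]].
      exact (HV 2 w z (H2 w Hw1) Hw2).
    + apply sat_subst. apply IHHf.
      intros n u v H1 H2. eapply persist; eauto.
    + apply (IHHf2 V HV x x (le_refl F x)). apply IHHf1; auto.
    + assert (E : (fun z => sat F V z a) = (fun z => sat F V z a')).
      { extensionality z; apply propositional_extensionality.
        destruct (IHHf V HV z) as [H1 H2].
        split; intros H; [apply H1|apply H2]; auto; apply le_refl. }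
      rewrite E. split; intros y _ H; exact H.
    + split; intros y _ H z Hz; destruct (IHHf V HV z) as [H1 H2];
        [apply H1|apply H2]; auto; apply le_refl.
Qed.
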